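(* Let $(L,\{\cdot,\cdot,\cdot\},\alpha)$ be a 3-Hom-pre-Lie algebra. Then $(L,[\cdot,\cdot,\cdot]_C,\alpha)$, where $[x,y,z]_C=\{x,y,z\}+\{y,z,x\}+\{z,x,y\}$, is a 3-Hom-Lie algebra.
   Context: A 3-Hom-Lie algebra is a triple $(L,[\cdot,\cdot,\cdot],\alpha)$ with $[\cdot,\cdot,\cdot]:\wedge^3L\to L$ skew-symmetric trilinear and $\alpha:L\to L$ linear satisfying $[\alpha(x),\alpha(y),[u,v,w]]=[[x,y,u],\alpha(v),\alpha(w)]+[\alpha(u),[x,y,v],\alpha(w)]+[\alpha(u),\alpha(v),[x,y,w]]$ for all $x,y,u,v,w\in L$. A 3-Hom-pre-Lie algebra is a triple $(L,\{\cdot,\cdot,\cdot\},\alpha)$ with $\{\cdot,\cdot,\cdot\}:L\otimes L\otimes L\to L$ trilinear and $\alpha:L\to L$ linear such that, with $[x,y,z]_C=\{x,y,z\}+\{y,z,x\}+\{z,x,y\}$, for all $x,y,z,u,v\in L$: $\{x,y,z\}=-\{y,x,z\}$; $\{\alpha(x),\alpha(y),\{z,u,v\}\}=\{[x,y,z]_C,\alpha(u),\alpha(v)\}+\{\alpha(z),[x,y,u]_C,\alpha(v)\}+\{\alpha(z),\alpha(u),\{x,y,v\}\}$; $\{[x,y,z]_C,\alpha(u),\alpha(v)\}=\{\alpha(x),\alpha(y),\{z,u,v\}\}+\{\alpha(y),\alpha(z),\{x,u,v\}\}+\{\alpha(z),\alpha(x),\{y,u,v\}\}$. *)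

(* Defs.v *)
From mathcomp Require Import all_boot all_order all_algebra.
Set Implicit Arguments. Unset Strict Implicit. Unset Printing Implicit Defensive.
Import GRing.Theory.
Local Open Scope ring_scope.

Definition trilinear (K : fieldType) (L : lmodType K) (f : L -> L -> L -> L) :=
  (forall (a : K) (x x' y z : L), f (a *: x + x') y z = a *: f x y z + f x' y z) /\
  (forall (a : K) (x y y' z : L), f x (a *: y + y') z = a *: f x y z + f x y' z) /\
  (forall (a : K) (x y z z' : L), f x y (a *: z + z') = a *: f x y z + f x y z').

(* Skew-symmetric: changes sign under transposition of any two arguments
   (transpositions (12) and (23) generate S_3). *)
Definition skew3 (K : fieldType) (L : lmodType K) (f : L -> L -> L -> L) :=
  (forall x y z : L, f y x z = - f x y z) /\
  (forall x y z : L, f x z y = - f x y z).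

Definition linmap (K : fieldType) (L : lmodType K) (al : L -> L) :=
  forall (a : K) (x y : L), al (a *: x + y) = a *: al x + al y.

Definition is_3HomLie (K : fieldType) (L : lmodType K)
    (br : L -> L -> L -> L) (al : L -> L) :=
  [/\ trilinear br, skew3 br, linmap al &
   forall x y u v w : L,
     br (al x) (al y) (br u v w) =
       br (br x y u) (al v) (al w) + br (al u) (br x y v) (al w)
       + br (al u) (al v) (br x y w)].

Definition bracketC (K : fieldType) (L : lmodType K)
    (op : L -> L -> L -> L) : L -> L -> L -> L :=
  fun x y z => op x y z + op y z x + op z x y.

Definition is_3HomPreLie (K : fieldType) (L : lmodType K)
    (op : L -> L -> L -> L) (al : L -> L) :=
  [/\ trilinear op, linmap al,
   (forall x y z : L, op x y z = - op y x z),
   (forall x y z u v : L,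
     op (al x) (al y) (op z u v) =
       op (bracketC op x y z) (al u) (al v)
       + op (al z) (bracketC op x y u) (al v)
       + op (al z) (al u) (op x y v)) &
   (forall x y z u v : L,
     op (bracketC op x y z) (al u) (al v) =
       op (al x) (al y) (op z u v) + op (al y) (al z) (op x u v)
       + op (al z) (al x) (op y u v))].

(* Main.v *)
Require Import Defs.
From mathcomp Require Import all_boot all_order all_algebra.
Set Implicit Arguments. Unset Strict Implicit. Unset Printing Implicit Defensive.
Import GRing.Theory.
Local Open Scope ring_scope.

Inductive expr := EV of nat | EA of nat | EO of expr & expr & expr
 | EAdd of expr & expr | ENeg of expr | EZ.

Fixpoint code (e : expr) : seq nat :=
  match e with
  | EV i => [:: 0%N; i] | EA i => [:: 1%N; i]
  | EO a b c => 2%N :: code a ++ code b ++ code c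
  | EAdd a b => 3%N :: code a ++ code b
  | ENeg a => 4%N :: code a | EZ => [:: 5%N] end.

Fixpoint lexlt (s t : seq nat) : bool :=
  match s, t with
  | [::], [::] => false | [::], _ => true | _, [::] => false
  | a :: s', b :: t' => (a < b)%N || ((a == b) && lexlt s' t') end.

Fixpoint beq (e f : expr) : bool :=
  match e, f with
  | EV i, EV j => i == j | EA i, EA j => i == j
  | EO a b c, EO a' b' c' => [&& beq a a', beq b b' & beq c c']
  | EAdd a b, EAdd a' b' => beq a a' && beq b b'
  | ENeg a, ENeg a' => beq a a' | EZ, EZ => true | _, _ => false end.

Lemma beq_eq e f : beq e f -> e = f.
Proof.
elim: e f => [i|i|a IHa b IHb c IHc|a IHa b IHb|a IHa|] [j|j|a' b' c'|a' b'|a'|] //=.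
- by move/eqP->.
- by move/eqP->.
- by case/and3P=> /IHa-> /IHb-> /IHc->.
- by case/andP=> /IHa-> /IHb->.
- by move/IHa->.
Qed.

Definition mk (c : int) m n p : int * expr :=
  if lexlt (code n) (code m) then (- c, EO n m p) else (c, EO m n p).

Fixpoint norm (e : expr) : seq (int * expr) :=
  match e with
  | EV i => [:: (1, EV i)] | EA i => [:: (1, EA i)]
  | EAdd a b => norm a ++ norm b
  | ENeg a => map (fun t => (- t.1, t.2)) (norm a)
  | EZ => [::]
  | EO a b c =>
    let lb := norm b in let lc := norm c in
    flatten (map (fun t1 => flatten (map (fun t2 =>
       map (fun t3 => mk (t1.1 * t2.1 * t3.1) t1.2 t2.2 t3.2) lc) lb)) (norm a))
  end.

Definition coef m (l : seq (int * expr)) : int :=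
  foldr (fun t acc => (if beq t.2 m then t.1 else 0) + acc) 0 l.

Fixpoint zcheck (fuel : nat) (l : seq (int * expr)) : bool :=
  match fuel with
  | 0%N => if l is [::] then true else false
  | S f => match l with
           | [::] => true
           | (c, m) :: r => (c + coef m r == 0) &&
                            zcheck f (filter (fun t => ~~ beq t.2 m) r)
           end
  end.

Section Eval.
Context (K : fieldType) (L : lmodType K) (op : L -> L -> L -> L) (al : L -> L).

Fixpoint eval (env : seq L) (e : expr) : L :=
  match e with
  | EV i => nth 0 env i | EA i => al (nth 0 env i)
  | EO a b c => op (eval env a) (eval env b) (eval env c)
  | EAdd a b => eval env a + eval env b
  | ENeg a => - eval env a | EZ => 0 end.

Definition evl env (l : seq (int * expr)) : L :=
  foldr (fun t acc => eval env t.2 *~ t.1 + acc) 0 l.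

Lemma evl_cat env l1 l2 : evl env (l1 ++ l2) = evl env l1 + evl env l2.
Proof. by elim: l1 => [|t l IH] /=; rewrite ?add0r // IH addrA. Qed.

Lemma split_evl env m l :
  evl env l = eval env m *~ coef m l + evl env (filter (fun t => ~~ beq t.2 m) l).
Proof.
elim: l => [|[c m'] l IH] /=; first by rewrite addr0.
case E: (beq m' m) => /=.
  by rewrite (beq_eq E) IH mulrzDr; apply: addrA.
by rewrite add0r IH addrCA.
Qed.

Lemma zcheck_ok env fuel l : zcheck fuel l -> evl env l = 0.
Proof.
elim: fuel l => [|f IH] [|[c m] r] //=.
case/andP=> /eqP H /IH {}IH.
by rewrite (split_evl env m r) IH addr0 -mulrzDr H mulr0z.
Qed.

Lemma lin_facts (g : L -> L) : (forall (a : K) x y, g (a *: x + y) = a *: g x + g y) ->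
  [/\ g 0 = 0, forall x y, g (x + y) = g x + g y & forall x (c : int), g (x *~ c) = g x *~ c].
Proof.
move=> H.
have g0 : g 0 = 0.
  have := H 1 0 0; rewrite !scale1r addr0 => E; apply: (@addrI _ (g 0)); by rewrite addr0 -E.
have gD : forall x y, g (x + y) = g x + g y by move=> x y; have := H 1 x y; rewrite !scale1r.
split=> // x c.
by rewrite -scaler_int -[_ *: x]addr0 H g0 addr0 scaler_int.
Qed.

Hypothesis Htri : trilinear op.
Hypothesis Hskew : forall x y z, op x y z = - op y x z.

Lemma opL : forall y z, let g := fun x => op x y z in
  [/\ g 0 = 0, forall x x', g (x + x') = g x + g x' & forall x (c : int), g (x *~ c) = g x *~ c].
Proof. move=> y z; apply: lin_facts => a x x'; case: Htri => H _; exact: H. Qed.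
Lemma opM : forall x z, let g := fun y => op x y z in
  [/\ g 0 = 0, forall y y', g (y + y') = g y + g y' & forall y (c : int), g (y *~ c) = g y *~ c].
Proof. move=> x z; apply: lin_facts => a y y'; case: Htri => _ [H _]; exact: H. Qed.
Lemma opR : forall x y, let g := fun z => op x y z in
  [/\ g 0 = 0, forall z z', g (z + z') = g z + g z' & forall z (c : int), g (z *~ c) = g z *~ c].
Proof. move=> x y; apply: lin_facts => a z z'; case: Htri => _ [_ H]; exact: H. Qed.

Lemma evl_mk env c m n p : evl env [:: mk c m n p] = op (eval env m) (eval env n) (eval env p) *~ c.
Proof.
rewrite /mk; case: ifP => _ /=; rewrite addr0 //.
by rewrite mulrNz -mulNrz -Hskew.
Qed.

Lemma evl3 env c m n lc :
  evl env (map (fun t3 => mk (c * t3.1) m n t3.2) lc) = op (eval env m) (eval env n) (evl env lc) *~ c.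
Proof.
elim: lc => [|[c3 p] l IH] /=.
  by case: (opR (eval env m) (eval env n)) => -> _ _; rewrite mul0rz.
have := evl_mk env (c * c3) m n p; rewrite /= addr0 => ->.
rewrite IH; case: (opR (eval env m) (eval env n)) => _ -> ->.
by rewrite mulrzDl -mulrzA mulrC.
Qed.

Lemma evl2 env c m lb lc :
  evl env (flatten (map (fun t2 => map (fun t3 => mk (c * t2.1 * t3.1) m t2.2 t3.2) lc) lb))
  = op (eval env m) (evl env lb) (evl env lc) *~ c.
Proof.
elim: lb => [|[c2 n] l IH] /=.
  by case: (opM (eval env m) (evl env lc)) => -> _ _; rewrite mul0rz.
rewrite evl_cat IH evl3 /=.
case: (opM (eval env m) (evl env lc)) => _ -> ->.
by rewrite mulrzDl -mulrzA mulrC.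
Qed.

Lemma norm_ok env e : evl env (norm e) = eval env e.
Proof.
elim: e => [i|i|a IHa b IHb c IHc|a IHa b IHb|a IHa|] /=.
- by rewrite addr0.
- by rewrite addr0.
- rewrite -IHa -IHb -IHc; elim: (norm a) => [|[c1 m] l IH] /=.
    by case: (opL (evl env (norm b)) (evl env (norm c))) => -> _ _.
  rewrite evl_cat IH evl2.
  by case: (opL (evl env (norm b)) (evl env (norm c))) => _ -> ->.
- by rewrite evl_cat IHa IHb.
- rewrite -IHa; elim: (norm a) => [|t l IH] /=; first by rewrite oppr0.
  by rewrite IH opprD mulrNz.
- by [].
Qed.

Definition allhold env (hs : seq (bool * expr * expr)) : Prop :=
  foldr (fun h acc => eval env h.1.2 = eval env h.2 /\ acc) True hs.

Definition sumh (hs : seq (bool * expr * expr)) : expr :=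
  foldr (fun h acc => EAdd (let d := EAdd h.1.2 (ENeg h.2) in if h.1.1 then d else ENeg d) acc) EZ hs.

Lemma sumh0 env hs : allhold env hs -> eval env (sumh hs) = 0.
Proof.
elim: hs => [|[[b P] Q] hs IH] //= [H /IH ->].
by case: b; rewrite /= H subrr ?oppr0 addr0.
Qed.

Lemma reflect_eq env E1 E2 hs :
  allhold env hs ->
  (let l := norm (EAdd E1 (ENeg (EAdd E2 (sumh hs)))) in zcheck (size l) l) ->
  eval env E1 = eval env E2.
Proof.
move=> H /(zcheck_ok env); rewrite norm_ok /= sumh0 // addr0.
by move/eqP; rewrite subr_eq0 => /eqP.
Qed.
End Eval.

Lemma addACA3 (K : fieldType) (L : lmodType K) (p q r p' q' r' : L) :
  (p + p') + (q + q') + (r + r') = (p + q + r) + (p' + q' + r').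
Proof. by rewrite [RHS]addrACA (addrACA p q p' q'). Qed.

Unset Implicit Arguments.

Theorem proposition3p4 (K : fieldType) (L : lmodType K)
    (op : L -> L -> L -> L) (al : L -> L) :
  [pchar K] =i pred0 ->
  is_3HomPreLie op al -> is_3HomLie (bracketC op) al.
Proof.
move=> _ [Htri Hal Hsk HA HB].
split => //.
- case: (Htri) => H1 [H2 H3]; rewrite /bracketC.
  split; [|split] => a x x' y z.
  + by rewrite H1 H2 H3 !scalerDr addACA3.
  + by rewrite H1 H2 H3 !scalerDr addACA3.
  + by rewrite H1 H2 H3 !scalerDr addACA3.
- split=> x y z.
  + apply: (@reflect_eq K L op al Htri Hsk [:: x; y; z]
      (EAdd (EAdd (EO (EV 1) (EV 0) (EV 2)) (EO (EV 0) (EV 2) (EV 1))) (EO (EV 2) (EV 1) (EV 0)))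
      (ENeg (EAdd (EAdd (EO (EV 0) (EV 1) (EV 2)) (EO (EV 1) (EV 2) (EV 0))) (EO (EV 2) (EV 0) (EV 1))))
      [::] I).
    by vm_compute.
  + apply: (@reflect_eq K L op al Htri Hsk [:: x; y; z]
      (EAdd (EAdd (EO (EV 0) (EV 2) (EV 1)) (EO (EV 2) (EV 1) (EV 0))) (EO (EV 1) (EV 0) (EV 2)))
      (ENeg (EAdd (EAdd (EO (EV 0) (EV 1) (EV 2)) (EO (EV 1) (EV 2) (EV 0))) (EO (EV 2) (EV 0) (EV 1))))
      [::] I).
    by vm_compute.
-
  move=> x y u v w.
  apply: (@reflect_eq K L op al Htri Hsk [:: x; y; u; v; w]
   (EAdd (EAdd (EO (EA 0) (EA 1) (EAdd (EAdd (EO (EV 2) (EV 3) (EV 4)) (EO (EV 3) (EV 4) (EV 2))) (EO (EV 4) (EV 2) (EV 3)))) (EO (EA 1) (EAdd (EAdd (EO (EV 2) (EV 3) (EV 4)) (EO (EV 3) (EV 4) (EV 2))) (EO (EV 4) (EV 2) (EV 3))) (EA 0))) (EO (EAdd (EAdd (EO (EV 2) (EV 3) (EV 4)) (EO (EV 3) (EV 4) (EV 2))) (EO (EV 4) (EV 2) (EV 3))) (EA 0) (EA 1)))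
   (EAdd (EAdd (EAdd (EAdd (EO (EAdd (EAdd (EO (EV 0) (EV 1) (EV 2)) (EO (EV 1) (EV 2) (EV 0))) (EO (EV 2) (EV 0) (EV 1))) (EA 3) (EA 4)) (EO (EA 3) (EA 4) (EAdd (EAdd (EO (EV 0) (EV 1) (EV 2)) (EO (EV 1) (EV 2) (EV 0))) (EO (EV 2) (EV 0) (EV 1))))) (EO (EA 4) (EAdd (EAdd (EO (EV 0) (EV 1) (EV 2)) (EO (EV 1) (EV 2) (EV 0))) (EO (EV 2) (EV 0) (EV 1))) (EA 3))) (EAdd (EAdd (EO (EA 2) (EAdd (EAdd (EO (EV 0) (EV 1) (EV 3)) (EO (EV 1) (EV 3) (EV 0))) (EO (EV 3) (EV 0) (EV 1))) (EA 4)) (EO (EAdd (EAdd (EO (EV 0) (EV 1) (EV 3)) (EO (EV 1) (EV 3) (EV 0))) (EO (EV 3) (EV 0) (EV 1))) (EA 4) (EA 2))) (EO (EA 4) (EA 2) (EAdd (EAdd (EO (EV 0) (EV 1) (EV 3)) (EO (EV 1) (EV 3) (EV 0))) (EO (EV 3) (EV 0) (EV 1)))))) (EAdd (EAdd (EO (EA 2) (EA 3) (EAdd (EAdd (EO (EV 0) (EV 1) (EV 4)) (EO (EV 1) (EV 4) (EV 0))) (EO (EV 4) (EV 0) (EV 1)))) (EO (EA 3) (EAdd (EAdd (EO (EV 0) (EV 1) (EV 4)) (EO (EV 1) (EV 4) (EV 0))) (EO (EV 4) (EV 0) (EV 1))) (EA 2))) (EO (EAdd (EAdd (EO (EV 0)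 (EV 1) (EV 4)) (EO (EV 1) (EV 4) (EV 0))) (EO (EV 4) (EV 0) (EV 1))) (EA 2) (EA 3))))
   [:: (true, (EO (EA 0) (EA 1) (EO (EV 2) (EV 3) (EV 4))), (EAdd (EAdd (EO (EAdd (EAdd (EO (EV 0) (EV 1) (EV 2)) (EO (EV 1) (EV 2) (EV 0))) (EO (EV 2) (EV 0) (EV 1))) (EA 3) (EA 4)) (EO (EA 2) (EAdd (EAdd (EO (EV 0) (EV 1) (EV 3)) (EO (EV 1) (EV 3) (EV 0))) (EO (EV 3) (EV 0) (EV 1))) (EA 4))) (EO (EA 2) (EA 3) (EO (EV 0) (EV 1) (EV 4)))));
   (false, (EO (EA 0) (EA 1) (EO (EV 2) (EV 4) (EV 3))), (EAdd (EAdd (EO (EAdd (EAdd (EO (EV 0) (EV 1) (EV 2)) (EO (EV 1) (EV 2) (EV 0))) (EO (EV 2) (EV 0) (EV 1))) (EA 4) (EA 3)) (EO (EA 2) (EAdd (EAdd (EO (EV 0) (EV 1) (EV 4)) (EO (EV 1) (EV 4) (EV 0))) (EO (EV 4) (EV 0) (EV 1))) (EA 3))) (EO (EA 2) (EA 4) (EO (EV 0) (EV 1) (EV 3)))));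
   (true, (EO (EA 0) (EA 1) (EO (EV 3) (EV 4) (EV 2))), (EAdd (EAdd (EO (EAdd (EAdd (EO (EV 0) (EV 1) (EV 3)) (EO (EV 1) (EV 3) (EV 0))) (EO (EV 3) (EV 0) (EV 1))) (EA 4) (EA 2)) (EO (EA 3) (EAdd (EAdd (EO (EV 0) (EV 1) (EV 4)) (EO (EV 1) (EV 4) (EV 0))) (EO (EV 4) (EV 0) (EV 1))) (EA 2))) (EO (EA 3) (EA 4) (EO (EV 0) (EV 1) (EV 2)))));
   (false, (EO (EA 0) (EA 2) (EO (EV 3) (EV 4) (EV 1))), (EAdd (EAdd (EO (EAdd (EAdd (EO (EV 0) (EV 2) (EV 3)) (EO (EV 2) (EV 3) (EV 0))) (EO (EV 3) (EV 0) (EV 2))) (EA 4) (EA 1)) (EO (EA 3) (EAdd (EAdd (EO (EV 0) (EV 2) (EV 4)) (EO (EV 2) (EV 4) (EV 0))) (EO (EV 4) (EV 0) (EV 2))) (EA 1))) (EO (EA 3) (EA 4) (EO (EV 0) (EV 2) (EV 1)))));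
   (true, (EO (EAdd (EAdd (EO (EV 0) (EV 2) (EV 4)) (EO (EV 2) (EV 4) (EV 0))) (EO (EV 4) (EV 0) (EV 2))) (EA 3) (EA 1)), (EAdd (EAdd (EO (EA 0) (EA 2) (EO (EV 4) (EV 3) (EV 1))) (EO (EA 2) (EA 4) (EO (EV 0) (EV 3) (EV 1)))) (EO (EA 4) (EA 0) (EO (EV 2) (EV 3) (EV 1)))));
   (true, (EO (EA 1) (EA 2) (EO (EV 3) (EV 4) (EV 0))), (EAdd (EAdd (EO (EAdd (EAdd (EO (EV 1) (EV 2) (EV 3)) (EO (EV 2) (EV 3) (EV 1))) (EO (EV 3) (EV 1) (EV 2))) (EA 4) (EA 0)) (EO (EA 3) (EAdd (EAdd (EO (EV 1) (EV 2) (EV 4)) (EO (EV 2) (EV 4) (EV 1))) (EO (EV 4) (EV 1) (EV 2))) (EA 0))) (EO (EA 3) (EA 4) (EO (EV 1) (EV 2) (EV 0)))));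
   (false, (EO (EAdd (EAdd (EO (EV 1) (EV 2) (EV 4)) (EO (EV 2) (EV 4) (EV 1))) (EO (EV 4) (EV 1) (EV 2))) (EA 3) (EA 0)), (EAdd (EAdd (EO (EA 1) (EA 2) (EO (EV 4) (EV 3) (EV 0))) (EO (EA 2) (EA 4) (EO (EV 1) (EV 3) (EV 0)))) (EO (EA 4) (EA 1) (EO (EV 2) (EV 3) (EV 0)))));
   (true, (EO (EA 2) (EA 3) (EO (EV 0) (EV 4) (EV 1))), (EAdd (EAdd (EO (EAdd (EAdd (EO (EV 2) (EV 3) (EV 0)) (EO (EV 3) (EV 0) (EV 2))) (EO (EV 0) (EV 2) (EV 3))) (EA 4) (EA 1)) (EO (EA 0) (EAdd (EAdd (EO (EV 2) (EV 3) (EV 4)) (EO (EV 3) (EV 4) (EV 2))) (EO (EV 4) (EV 2) (EV 3))) (EA 1))) (EO (EA 0) (EA 4) (EO (EV 2) (EV 3) (EV 1)))));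
   (false, (EO (EA 2) (EA 3) (EO (EV 1) (EV 4) (EV 0))), (EAdd (EAdd (EO (EAdd (EAdd (EO (EV 2) (EV 3) (EV 1)) (EO (EV 3) (EV 1) (EV 2))) (EO (EV 1) (EV 2) (EV 3))) (EA 4) (EA 0)) (EO (EA 1) (EAdd (EAdd (EO (EV 2) (EV 3) (EV 4)) (EO (EV 3) (EV 4) (EV 2))) (EO (EV 4) (EV 2) (EV 3))) (EA 0))) (EO (EA 1) (EA 4) (EO (EV 2) (EV 3) (EV 0)))))]
   (conj (HA x y u v w) (conj (HA x y u w v) (conj (HA x y v w u) (conj (HA x u v w y) (conj (HB x u w v y) (conj (HA y u v w x) (conj (HB y u w v x) (conj (HA u v x w y) (conj (HA u v y w x) I)))))))))).
  by vm_compute.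
Qed.
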